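(* Let $G$ and $F$ be two nilpotent Chernikov $p$-groups, each with top $H_m$ and bottom $M^{(n)}$, and let $t,f:H_m\times H_m\to M_p^{(n)}$ be their associated commutator functions. Then $G\cong F$ if and only if there exist an automorphism $\sigma$ of $M^{(n)}$ and an automorphism $\theta$ of $H_m$ such that $f(\theta(x),\theta(y))=\sigma(t(x,y))$ for all $x,y\in H_m$.
   Context: Groups are written additively; $[u,v]=u+v-u-v$. A Chernikov $p$-group $G$ is an extension of a finite direct sum $M$ of quasi-cyclic $p$-groups (its bottom; it is the largest divisible abelian subgroup of $G$) by a finite $p$-group $H=G/M$ (its top). $M^{(n)}$ denotes the direct sum of $n$ quasi-cyclic $p$-groups, $M_p^{(n)}=\{a\in M^{(n)}:pa=0\}$, and $H_m$ is the elementary abelian $p$-group of rank $m$. For a nilpotent Chernikov $p$-group $G$ with bottom $M^{(n)}$ and top $H_m$ (so $H_m$ acts trivially on $M^{(n)}$), its commutator function is $t(x,y)=[\bar x,\bar y]$, where $\bar x,\bar y\in G$ are any preimages of $x,y\in H_m$; it is well defined and is a skew-symmetric bilinear map $H_m\times H_m\to M_p^{(n)}$. *)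

(* Defs.v *)
From HB Require Import structures.
From mathcomp Require Import all_boot all_order all_algebra all_field.
Set Implicit Arguments. Unset Strict Implicit. Unset Printing Implicit Defensive.
Import GRing.Theory Num.Theory.
Local Open Scope ring_scope.

Definition is_group (T : Type) (add : T -> T -> T) (z : T) (opp : T -> T) : Prop :=
  [/\ (forall x y w, add x (add y w) = add (add x y) w),
      (forall x, add z x = x) &
      (forall x, add (opp x) x = z)].

Record group := Group {
  gcarrier :> Type;
  gadd : gcarrier -> gcarrier -> gcarrier;
  gzero : gcarrier;
  gopp : gcarrier -> gcarrier;
  gaxiom : is_group gadd gzero gopp }.

Arguments gadd {g}. Arguments gzero {g}. Arguments gopp {g}.

Definition gcomm (G : group) (u v : G) : G :=
  gadd (gadd (gadd u v) (gopp u)) (gopp v).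

Definition group_iso (G F : group) (f : G -> F) : Prop :=
  bijective f /\ forall x y, f (gadd x y) = gadd (f x) (f y).

Inductive gen (G : group) (S : G -> Prop) : G -> Prop :=
  | gen_base x : S x -> gen S x
  | gen_zero : gen S gzero
  | gen_add x y : gen S x -> gen S y -> gen S (gadd x y)
  | gen_opp x : gen S x -> gen S (gopp x).

(* lower central series: lcs G i = gamma_(i+1)(G) *)
Fixpoint lcs (G : group) (i : nat) : G -> Prop :=
  match i with
  | 0 => fun _ => True
  | i'.+1 => @gen G (fun z => exists x y, @lcs G i' x /\ z = gcomm x y)
  end.

Definition nilpotent (G : group) : Prop :=
  exists c, forall x : G, @lcs G c x -> x = gzero.

(* ---------- The model of M^(n): n-tuples of p-power roots of unity in algC
   (the quasi-cyclic p-group Z(p^oo) written multiplicatively). ---------- *)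
Definition prufer_elt (p : nat) (z : algC) : Prop := exists k, z ^+ (p ^ k) = 1.

Definition inM (p n : nat) (v : 'I_n -> algC) : Prop := forall i, prufer_elt p (v i).
Arguments inM : clear implicits.

(* the group law of M^(n) (the paper's "+", here coordinatewise product) *)
Definition Mop (n : nat) (u v : 'I_n -> algC) : 'I_n -> algC := fun i => u i * v i.

Definition autM (p n : nat) (s : ('I_n -> algC) -> ('I_n -> algC)) : Prop :=
  [/\ (forall u, inM p n u -> inM p n (s u)),
      (forall u v, inM p n u -> inM p n v -> s (Mop u v) = Mop (s u) (s v)),
      (forall u v, inM p n u -> inM p n v -> s u = s v -> u = v) &
      (forall v, inM p n v -> exists2 u, inM p n u & s u = v)].
Arguments autM : clear implicits.

(* H_m = elementary abelian p-group of rank m, modelled as 'rV['F_p]_m;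
   automorphism of H_m *)
Definition autH (p m : nat) (th : 'rV['F_p]_m -> 'rV['F_p]_m) : Prop :=
  bijective th /\ forall x y, th (x + y) = th x + th y.

(* G is an extension of M^(n) by H_m:  1 -> M^(n) -phi-> G -pi-> H_m -> 1,
   i.e. phi is an isomorphism of M^(n) onto the normal subgroup M = ker pi
   (the bottom of G), and pi induces G/M ~= H_m (the top). *)
Definition chernikov_ext (p n m : nat) (G : group)
    (phi : ('I_n -> algC) -> G) (pi : G -> 'rV['F_p]_m) : Prop :=
  [/\ (forall u v, inM p n u -> inM p n v -> phi (Mop u v) = gadd (phi u) (phi v)),
      (forall u v, inM p n u -> inM p n v -> phi u = phi v -> u = v),
      (forall x y, pi (gadd x y) = pi x + pi y),
      (forall w, exists x, pi x = w) &
      (forall x, pi x = 0 <-> exists2 u, inM p n u & phi u = x)].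

(* graph of the commutator function: t(x,y) = w  iff  [xbar, ybar] = w for
   (some, equivalently any) preimages xbar, ybar of x, y. *)
Definition comm_fun (p n m : nat) (G : group)
    (phi : ('I_n -> algC) -> G) (pi : G -> 'rV['F_p]_m)
    (x y : 'rV['F_p]_m) (w : 'I_n -> algC) : Prop :=
  inM p n w /\ exists g h, [/\ pi g = x, pi h = y & phi w = gcomm g h].

(* Main.v *)
Require Import Defs.
From HB Require Import structures.
From mathcomp Require Import all_boot all_order all_algebra all_field.
From Stdlib Require Import ClassicalEpsilon FunctionalExtensionality.
Import GRing.Theory Num.Theory.
Set Implicit Arguments. Unset Strict Implicit. Unset Printing Implicit Defensive.


Section GroupBasics.
Variable G : group.
Local Notation "a ⊕ b" := (@gadd G a b) (at level 50, left associativity).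
Local Notation "⊖ a" := (@gopp G a) (at level 35).
Local Notation "'O" := (@gzero G).

Lemma gA (x y w : G) : x ⊕ (y ⊕ w) = x ⊕ y ⊕ w.
Proof. by case: (gaxiom G). Qed.
Lemma g0x (x : G) : 'O ⊕ x = x.
Proof. by case: (gaxiom G). Qed.
Lemma gNx (x : G) : ⊖ x ⊕ x = 'O.
Proof. by case: (gaxiom G). Qed.
Lemma gKx (x y : G) : ⊖ x ⊕ (x ⊕ y) = y.
Proof. by rewrite gA gNx g0x. Qed.
Lemma gxN (x : G) : x ⊕ ⊖ x = 'O.
Proof.
rewrite -[x ⊕ ⊖ x]g0x -[in LHS](gNx (⊖ x)) -gA [⊖ x ⊕ (x ⊕ ⊖ x)]gA gNx g0x.
by rewrite gNx.
Qed.
Lemma gx0 (x : G) : x ⊕ 'O = x.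
Proof. by rewrite -(gNx x) gA gxN g0x. Qed.
Lemma gxK (x y : G) : x ⊕ (⊖ x ⊕ y) = y.
Proof. by rewrite gA gxN g0x. Qed.
Lemma gNK (x y : G) : y ⊕ ⊖ x ⊕ x = y.
Proof. by rewrite -gA gNx gx0. Qed.
Lemma gKN (x y : G) : y ⊕ x ⊕ ⊖ x = y.
Proof. by rewrite -gA gxN gx0. Qed.
Lemma gaddIl (x y w : G) : x ⊕ y = x ⊕ w -> y = w.
Proof. by move=> h; rewrite -(gKx x y) h gKx. Qed.
Lemma gaddIr (x y w : G) : y ⊕ x = w ⊕ x -> y = w.
Proof. by move=> h; rewrite -(gKN x y) h gKN. Qed.
Lemma goppK (x : G) : ⊖ (⊖ x) = x.
Proof. by apply: (@gaddIl (⊖ x)); rewrite gxN gNx. Qed.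
Lemma goppD (x y : G) : ⊖ (x ⊕ y) = ⊖ y ⊕ ⊖ x.
Proof. by apply: (@gaddIl (x ⊕ y)); rewrite gxN -gA gxK gxN. Qed.
Lemma gopp0 : ⊖ 'O = 'O.
Proof. by rewrite -[LHS]g0x gxN. Qed.
Lemma geq_sub (x y : G) : ⊖ x ⊕ y = 'O -> x = y.
Proof. by move=> h; rewrite -(gxK x y) h gx0. Qed.

Fixpoint gmul (k : nat) (x : G) : G := if k is k'.+1 then gmul k' x ⊕ x else 'O.

Lemma gmulS k x : gmul k.+1 x = gmul k x ⊕ x. Proof. by []. Qed.
Lemma gmulD a b x : gmul (a + b) x = gmul a x ⊕ gmul b x.
Proof. elim: b => [|b IH]; first by rewrite addn0 gx0. by rewrite addnS /= IH gA. Qed.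
Lemma gmul0g x : gmul 0 x = 'O. Proof. by []. Qed.
Lemma gmulg0 k : gmul k 'O = 'O.
Proof. by elim: k => //= k ->; rewrite gx0. Qed.

Definition central (z : G) := forall g : G, z ⊕ g = g ⊕ z.

Lemma central_add z w : central z -> central w -> central (z ⊕ w).
Proof. by move=> hz hw g; rewrite -gA hw gA hz gA. Qed.
Lemma central_opp z : central z -> central (⊖ z).
Proof. move=> hz g; apply: (@gaddIl z); rewrite gxK gA hz gKN //. Qed.
Lemma central0 : central 'O. Proof. by move=> g; rewrite g0x gx0. Qed.

Lemma gcomm_swap (u v : G) : u ⊕ v = gcomm u v ⊕ v ⊕ u.
Proof. by rewrite /gcomm gNK gNK. Qed.

Lemma gmul_central k (x y : G) : central x -> central y -> gmul k (x ⊕ y) = gmul k x ⊕ gmul k y.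
Proof.
move=> cx cy; elim: k => [|k IH] /=; first by rewrite g0x.
rewrite IH -!gA; congr (_ ⊕ _); rewrite !gA; congr (_ ⊕ _); by rewrite cx.
Qed.
Lemma central_gmul k z : central z -> central (gmul k z).
Proof. move=> hz; elim: k => [|k IH] /=; [exact: central0 | exact: central_add]. Qed.

Lemma gmul_addc k (a w : G) : central w -> gmul k (a ⊕ w) = gmul k a ⊕ gmul k w.
Proof.
move=> hw; elim: k => [|k IH] /=; first by rewrite g0x.
rewrite IH -!gA; congr (_ ⊕ _); rewrite !gA; congr (_ ⊕ _).
by rewrite (central_gmul k hw).
Qed.

Lemma commute_gmul0 (x g : G) k : x ⊕ g = g ⊕ x -> x ⊕ gmul k g = gmul k g ⊕ x.
Proof.
move=> h; elim: k => [|k IH] /=; first by rewrite g0x gx0.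
by rewrite gA IH -gA h gA.
Qed.

Lemma gmul_opp k (x : G) : gmul k (⊖ x) = ⊖ gmul k x.
Proof.
elim: k => [|k IH] /=; first by rewrite gopp0.
by rewrite IH -goppD (commute_gmul0 k (erefl (x ⊕ x))).
Qed.

Lemma gcomm_uniq (u v c : G) : u ⊕ v = c ⊕ v ⊕ u -> gcomm u v = c.
Proof. by move=> h; apply: (@gaddIr v); apply: (@gaddIr u); rewrite -gcomm_swap. Qed.

Lemma gcomm_centl (a z b : G) : central z -> gcomm (a ⊕ z) b = gcomm a b.
Proof.
move=> hz; apply: gcomm_uniq.
move: (gcomm_swap a b); move: (gcomm a b) => c e.
by rewrite -gA hz gA e !gA.
Qed.

Lemma gcomm_centr (a b w : G) : central w -> gcomm a (b ⊕ w) = gcomm a b.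
Proof.
move=> hw; apply: gcomm_uniq.
move: (gcomm_swap a b); move: (gcomm a b) => c e.
by rewrite gA e -[c ⊕ b ⊕ a ⊕ w]gA -hw !gA.
Qed.

Section Collect.
Hypothesis ccent : forall a b : G, central (gcomm a b).
Variable gen : nat -> G.

Fixpoint Ssum (c : nat -> nat) (k : nat) : G :=
  if k is k'.+1 then Ssum c k' ⊕ gmul (c k') (gen k') else 'O.
Fixpoint Qsum (c1 c2 : nat -> nat) (k : nat) : G :=
  if k is k'.+1 then Qsum c1 c2 k' ⊕ gcomm (gmul (c1 k') (gen k')) (Ssum c2 k') else 'O.

Lemma Qsum_central c1 c2 k : central (Qsum c1 c2 k).
Proof. elim: k => [|k IH] /=; [exact: central0 | exact: central_add]. Qed.

Lemma collect c1 c2 c3 :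
  (forall i, gmul (c1 i + c2 i) (gen i) = gmul (c3 i) (gen i)) ->
  forall k, Ssum c1 k ⊕ Ssum c2 k = Ssum c3 k ⊕ Qsum c1 c2 k.
Proof.
move=> h3; elim=> [|k IH] /=; first by rewrite g0x.
move: IH (Qsum_central c1 c2 k) (ccent (gmul (c1 k) (gen k)) (Ssum c2 k)).
move: (gcomm_swap (gmul (c1 k) (gen k)) (Ssum c2 k)).
move: (gcomm (gmul (c1 k) (gen k)) (Ssum c2 k)) (Qsum c1 c2 k) => C Q eC IH hQ hC.
rewrite -gA [gmul (c1 k) (gen k) ⊕ _]gA eC !gA -(hC (Ssum c1 k)).
rewrite -[C ⊕ Ssum c1 k ⊕ Ssum c2 k]gA IH -!gA.
rewrite (hQ (gmul (c1 k) (gen k) ⊕ gmul (c2 k) (gen k))) -gmulD h3.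
by rewrite hC -!gA.
Qed.
End Collect.

End GroupBasics.

Local Open Scope ring_scope.


Definition one_n (n : nat) : 'I_n -> algC := fun _ => 1%R.
Arguments one_n : clear implicits.
Definition Mpow (n k : nat) (u : 'I_n -> algC) : 'I_n -> algC := fun i => (u i ^+ k)%R.

Lemma inM_one p n : inM p n (one_n n).
Proof. by move=> i; exists 0%N; rewrite expr1n. Qed.

Lemma inM_Mop p n u v : inM p n u -> inM p n v -> inM p n (Mop u v).
Proof.
move=> hu hv i; case: (hu i) => a ha; case: (hv i) => b hb; exists (a + b)%N.
rewrite /Mop exprMn expnD exprM ha expr1n mulnC exprM hb expr1n mulr1 //.
Qed.

Lemma MopC n (u v : 'I_n -> algC) : Mop u v = Mop v u.
Proof. by apply: functional_extensionality => i; rewrite /Mop mulrC. Qed.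

Lemma Mop1 n (u : 'I_n -> algC) : Mop (one_n n) u = u.
Proof. by apply: functional_extensionality => i; rewrite /Mop /one_n mul1r. Qed.

Lemma MpowS n k (u : 'I_n -> algC) : Mpow k.+1 u = Mop (Mpow k u) u.
Proof. by apply: functional_extensionality => i; rewrite /Mop /Mpow exprSr. Qed.

Lemma inM_Mpow p n k u : inM p n u -> inM p n (Mpow k u).
Proof.
move=> hu; elim: k => [|k IH]; first by move=> i; exists 0%N; rewrite /Mpow expr0 expr1n.
by rewrite MpowS; apply: inM_Mop.
Qed.

Lemma inM_root p n u : prime p -> inM p n u ->
  exists2 v, inM p n v & Mpow p v = u.
Proof.
move=> pr hu; have p0 : (0 < p)%N by apply: prime_gt0.
exists (fun i => p.-root (u i)).
  move=> i; case: (hu i) => k hk; exists k.+1.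
  by rewrite expnS exprM rootCK.
by apply: functional_extensionality => i; rewrite /Mpow rootCK.
Qed.

Section Cher.
Variables (p n m : nat) (G : group) (phi : ('I_n -> algC) -> G) (pi : G -> 'rV['F_p]_m).
Hypothesis pr : prime p.
Hypothesis Hc : chernikov_ext phi pi.

Local Notation "a ⊕ b" := (@gadd G a b) (at level 50, left associativity).
Local Notation "⊖ a" := (@gopp G a) (at level 35).
Local Notation "'O" := (@gzero G).

Lemma phi_add u v : inM p n u -> inM p n v -> phi (Mop u v) = phi u ⊕ phi v.
Proof. by case: Hc => h *; apply: h. Qed.
Lemma phi_inj u v : inM p n u -> inM p n v -> phi u = phi v -> u = v.
Proof. by case: Hc => _ h *; apply: h. Qed.
Lemma pi_add x y : pi (x ⊕ y) = (pi x + pi y)%R.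
Proof. by case: Hc => _ _ h *; apply: h. Qed.
Lemma pi_surj w : exists x, pi x = w.
Proof. by case: Hc => _ _ _ h *; apply: h. Qed.
Lemma pi_ker x : pi x = 0%R <-> exists2 u, inM p n u & phi u = x.
Proof. by case: Hc => _ _ _ _ h; apply: h. Qed.

Lemma pi0 : pi 'O = 0%R.
Proof. by apply: (addrI (pi 'O)); rewrite -pi_add g0x addr0. Qed.
Lemma piN x : pi (⊖ x) = (- pi x)%R.
Proof. by apply: (addrI (pi x)); rewrite -pi_add gxN pi0 subrr. Qed.
Lemma pi_gmul k x : pi (gmul k x) = (pi x *+ k)%R.
Proof. by elim: k => [|k IH] /=; rewrite ?pi0 // pi_add IH mulrSr. Qed.
Lemma pi_gmul_p x : pi (gmul p x) = 0%R.
Proof. by rewrite pi_gmul -scaler_nat pchar_Fp_0 // scale0r. Qed.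
Lemma pi_comm x y : pi (gcomm x y) = 0%R.
Proof. by rewrite /gcomm !pi_add !piN addrAC addrK subrr. Qed.

Lemma phi_one : phi (one_n n) = 'O.
Proof.
have h := phi_add (@inM_one p n) (@inM_one p n); rewrite Mop1 in h.
by apply: (@gaddIl _ (phi (one_n n))); rewrite -h gx0.
Qed.
Lemma phi_Mpow k u : inM p n u -> phi (Mpow k u) = gmul k (phi u).
Proof.
move=> hu; elim: k => [|k IH]; first by rewrite /= -phi_one; congr phi; apply: functional_extensionality => i; rewrite /Mpow expr0.
by rewrite MpowS phi_add ?IH //; apply: inM_Mpow.
Qed.

Definition K (z : G) := pi z = 0%R.

Lemma K_add z w : K z -> K w -> K (z ⊕ w).
Proof. by rewrite /K pi_add => -> ->; rewrite addr0. Qed.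
Lemma K_opp z : K z -> K (⊖ z).
Proof. by rewrite /K piN => ->; rewrite oppr0. Qed.
Lemma K_gmul k z : K z -> K (gmul k z).
Proof. by rewrite /K pi_gmul => ->; rewrite mul0rn. Qed.
Lemma K_phi u : inM p n u -> K (phi u).
Proof. by move=> h; apply/pi_ker; exists u. Qed.

Lemma K_comm z w : K z -> K w -> z ⊕ w = w ⊕ z.
Proof.
move=> /pi_ker [u hu <-] /pi_ker [v hv <-].
by rewrite -!phi_add // MopC.
Qed.

Lemma K_div z : K z -> exists2 w, K w & gmul p w = z.
Proof.
move=> /pi_ker [u hu <-]; case: (inM_root pr hu) => v hv <-.
by exists (phi v); [apply: K_phi | rewrite phi_Mpow].
Qed.


Lemma comm0_commute (u v : G) : gcomm u v = 'O -> u ⊕ v = v ⊕ u.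
Proof. by move=> h; rewrite gcomm_swap h g0x. Qed.

Lemma commute_comm0 (u v : G) : u ⊕ v = v ⊕ u -> gcomm u v = 'O.
Proof. by move=> h; rewrite /gcomm h gKN gxN. Qed.

Lemma gcomm_addr (y a b : G) : gcomm y b ⊕ a = a ⊕ gcomm y b ->
  gcomm y (a ⊕ b) = gcomm y a ⊕ gcomm y b.
Proof.
move=> h; apply: (@gaddIr _ (a ⊕ b)); apply: (@gaddIr _ y).
rewrite -gcomm_swap.
move: (gcomm_swap y a) (gcomm_swap y b) h; move: (gcomm y a) (gcomm y b) => ca cb e2 e3 h.
rewrite gA e2 -[ca ⊕ a ⊕ y ⊕ b]gA e3 !gA.
by rewrite -[ca ⊕ a ⊕ cb]gA -h !gA.
Qed.

Lemma gcomm_addl (a b g : G) : K a -> K b ->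
  gcomm (a ⊕ b) g = gcomm a g ⊕ gcomm b g.
Proof.
move=> ha hb; apply: (@gaddIr _ g); apply: (@gaddIr _ (a ⊕ b)).
rewrite -gcomm_swap.
have kca := pi_comm a g; have kcb := pi_comm b g.
move: (gcomm_swap a g) (gcomm_swap b g) kca kcb; move: (gcomm a g) (gcomm b g) => ca cb ea eb kca kcb.
rewrite -gA eb !gA (K_comm ha kcb) -[cb ⊕ a ⊕ g]gA ea !gA.
by rewrite (K_comm kcb kca).
Qed.

Lemma gcomm0l (g : G) : gcomm 'O g = 'O.
Proof. by apply: commute_comm0; rewrite g0x gx0. Qed.
Lemma gcomm0r (g : G) : gcomm g 'O = 'O.
Proof. by apply: commute_comm0; rewrite g0x gx0. Qed.

Lemma commute_gmul (x g : G) k : x ⊕ g = g ⊕ x -> x ⊕ gmul k g = gmul k g ⊕ x.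
Proof.
move=> h; elim: k => [|k IH] /=; first by rewrite g0x gx0.
by rewrite gA IH -gA h gA.
Qed.

Section Central.
Variable g : G.
Definition dl (j : nat) (z : G) := iter j (fun y => gcomm y g) z.

Lemma lcs_dl j z : lcs j (dl j z).
Proof.
elim: j => [|j IH] //=; apply: gen_base; exists (dl j z), g; split => //.
Qed.

Lemma K_dl j z : K z -> K (dl j z).
Proof. by case: j => [|j] //= _; apply: pi_comm. Qed.

Lemma dl_add j a b : K a -> K b -> dl j (a ⊕ b) = dl j a ⊕ dl j b.
Proof.
move=> ha hb; elim: j => [|j IH] //=.
by rewrite IH gcomm_addl //; apply: K_dl.
Qed.

Lemma dl0 j : dl j 'O = 'O.
Proof. by elim: j => [|j IH] //=; rewrite IH gcomm0l. Qed.

Lemma K0 : K 'O.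
Proof. exact: pi0. Qed.

Lemma dl_gmul j k a : K a -> dl j (gmul k a) = gmul k (dl j a).
Proof.
move=> ha; elim: k => [|k IH] /=; first exact: dl0.
by rewrite dl_add ?IH //; apply: K_gmul.
Qed.

Lemma key_p y : K y -> gcomm (gcomm y g) g = 'O -> gmul p (gcomm y g) = 'O.
Proof.
move=> hy h1; have h2 := comm0_commute h1.
have e : forall k, gcomm y (gmul k g) = gmul k (gcomm y g).
  elim=> [|k IH] /=; first exact: gcomm0r.
  by rewrite gcomm_addr ?IH //; apply: commute_gmul.
rewrite -e; apply: commute_comm0; apply: K_comm => //; exact: pi_gmul_p.
Qed.

Lemma descend j : (1 <= j)%N -> (forall z, K z -> dl j.+1 z = 'O) ->
  forall z, K z -> dl j z = 'O.
Proof.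
case: j => // i _ h z hz.
case: (K_div hz) => z' hz' <-.
rewrite dl_gmul //=; apply: key_p; first exact: K_dl.
by have := h z' hz'.
Qed.

Hypothesis nil : nilpotent G.

Lemma K_central_g z : K z -> z ⊕ g = g ⊕ z.
Proof.
case: nil => c hc.
have h0 : forall z, K z -> dl c.+1 z = 'O.
  by move=> w _ /=; rewrite (hc _ (lcs_dl c w)) gcomm0l.
have hi : forall i, (i <= c)%N -> forall z, K z -> dl (c.+1 - i) z = 'O.
  elim=> [|i IH] hi; first by rewrite subn0.
  apply: descend; first by rewrite subSS subn_gt0.
  by rewrite subSS -subSn; [apply: IH; apply: ltnW | apply: ltnW].
move=> hz; have := hi c (leqnn c) z hz; rewrite subSn // subnn /= => h.
exact: comm0_commute.
Qed.
End Central.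

Lemma K_central (nil : nilpotent G) z : K z -> central z.
Proof. by move=> hz g; apply: K_central_g. Qed.

Lemma gmul_mod k (g : G) : gmul p g = 'O -> gmul (k %% p)%N g = gmul k g.
Proof.
move=> hg; rewrite {2}(divn_eq k p) gmulD.
suff -> : gmul (k %/ p * p)%N g = 'O by rewrite g0x.
elim: (k %/ p)%N => [|q IH] //; by rewrite mulSn gmulD hg IH g0x.
Qed.

Section Nil.
Hypothesis nil : nilpotent G.

Lemma comm_central (a b : G) : central (gcomm a b).
Proof. exact: (K_central nil (pi_comm a b)). Qed.

Lemma lift_p x : exists g, pi g = x /\ gmul p g = 'O.
Proof.
case: (pi_surj x) => g0 hg0.
case: (K_div (pi_gmul_p g0)) => w hw ew.
exists (g0 ⊕ ⊖ w); split.
  by rewrite pi_add piN hw oppr0 addr0.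
rewrite gmul_addc; last by apply: central_opp; apply: K_central.
by rewrite gmul_opp ew gxN.
Qed.

Lemma comm_images a a' b b' : pi a = pi a' -> pi b = pi b' -> gcomm a b = gcomm a' b'.
Proof.
move=> ea eb.
have ka : K (⊖ a ⊕ a') by rewrite /K pi_add piN ea addNr.
have kb : K (⊖ b ⊕ b') by rewrite /K pi_add piN eb addNr.
rewrite -(gxK a a') -(gxK b b') gcomm_centl ?gcomm_centr //; exact: K_central.
Qed.
End Nil.

End Cher.
Local Notation "a ⊕ b" := (gadd a b) (at level 50, left associativity).
Local Notation "⊖ a" := (gopp a) (at level 35).



Lemma natr_Fp (p : nat) (a : 'F_p) : (nat_of_ord a)%:R = a.
Proof. exact: natr_Zp. Qed.
Lemma val_Fp_add (p : nat) (pr : prime p) (a b : 'F_p) :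
  nat_of_ord (a + b) = ((nat_of_ord a + nat_of_ord b) %% p)%N.
Proof. by rewrite -val_Fp_nat // natrD !natr_Zp. Qed.

Section Back.
Variables (p n m : nat) (G F : group).
Variables (phiG : ('I_n -> algC) -> G) (piG : G -> 'rV['F_p]_m).
Variables (phiF : ('I_n -> algC) -> F) (piF : F -> 'rV['F_p]_m).
Hypothesis pr : prime p.
Hypotheses (nilG : nilpotent G) (HG : chernikov_ext phiG piG).
Hypotheses (nilF : nilpotent F) (HF : chernikov_ext phiF piF).
Variables (sigma : ('I_n -> algC) -> ('I_n -> algC)) (theta : 'rV['F_p]_m -> 'rV['F_p]_m).
Hypotheses (hs : autM p n sigma) (ht : autH theta).
Hypothesis hcomm : forall (x y : 'rV['F_p]_m) (w : 'I_n -> algC),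
       comm_fun phiG piG x y w -> comm_fun phiF piF (theta x) (theta y) (sigma w).

Lemma theta_add x y : theta (x + y) = theta x + theta y.
Proof. by case: ht => _ h; apply: h. Qed.
Lemma theta0 : theta 0 = 0.
Proof. by apply: (addrI (theta 0)); rewrite -theta_add !addr0. Qed.
Lemma theta_muln k x : theta (x *+ k) = theta x *+ k.
Proof. by elim: k => [|k IH]; rewrite ?mulr0n ?theta0 // !mulrSr theta_add IH. Qed.
Lemma theta_inj : injective theta.
Proof. by case: ht => -[g h1 h2] _; apply: can_inj h1. Qed.

Lemma sigma_inM u : inM p n u -> inM p n (sigma u).
Proof. by case: hs => h *; apply: h. Qed.
Lemma sigma_Mop u v : inM p n u -> inM p n v -> sigma (Mop u v) = Mop (sigma u) (sigma v).
Proof. by case: hs => _ h *; apply: h. Qed.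
Lemma sigma_inj u v : inM p n u -> inM p n v -> sigma u = sigma v -> u = v.
Proof. by case: hs => _ _ h *; apply: h. Qed.
Lemma sigma_surj v : inM p n v -> exists2 u, inM p n u & sigma u = v.
Proof. by case: hs => _ _ _ h; apply: h. Qed.

Definition invphiG (z : G) : 'I_n -> algC :=
  epsilon (inhabits (one_n n)) (fun u => inM p n u /\ phiG u = z).

Lemma invphiG_spec z : K piG z -> inM p n (invphiG z) /\ phiG (invphiG z) = z.
Proof.
move=> /(pi_ker HG) [u hu hz]; rewrite /invphiG.
by apply: (epsilon_spec (inhabits (one_n n)) (fun u => inM p n u /\ phiG u = z)); exists u.
Qed.

Lemma invphiG_phi u : inM p n u -> invphiG (phiG u) = u.
Proof.
move=> hu; have [h1 h2] := invphiG_spec (K_phi HG hu).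
exact: (phi_inj HG h1 hu h2).
Qed.

Definition psi (z : G) : F := phiF (sigma (invphiG z)).

Lemma psi_K z : K piG z -> K piF (psi z).
Proof. by move=> /invphiG_spec [h _]; apply: (K_phi HF); apply: sigma_inM. Qed.

Lemma psi_add z w : K piG z -> K piG w -> psi (z ⊕ w) = psi z ⊕ psi w.
Proof.
move=> /invphiG_spec [hz ez] /invphiG_spec [hw ew].
rewrite /psi -{1}ez -{1}ew -(phi_add HG) // invphiG_phi; last exact: inM_Mop.
by rewrite sigma_Mop // (phi_add HF) //; apply: sigma_inM.
Qed.

Lemma psi0 : psi gzero = gzero.
Proof.
have k0 : K piG gzero := pi0 HG.
have h := psi_add k0 k0; rewrite g0x in h.
by apply: (@gaddIl _ (psi gzero)); rewrite -h gx0.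
Qed.

Definition liftG (x : 'rV['F_p]_m) : G :=
  epsilon (inhabits gzero) (fun g => piG g = x /\ gmul p g = gzero).
Definition liftF (x : 'rV['F_p]_m) : F :=
  epsilon (inhabits gzero) (fun g => piF g = x /\ gmul p g = gzero).

Lemma liftG_spec x : piG (liftG x) = x /\ gmul p (liftG x) = gzero.
Proof.
by apply: (epsilon_spec (inhabits gzero) (fun g => piG g = x /\ gmul p g = gzero)); apply: (lift_p pr HG nilG).
Qed.
Lemma liftF_spec x : piF (liftF x) = x /\ gmul p (liftF x) = gzero.
Proof.
by apply: (epsilon_spec (inhabits gzero) (fun g => piF g = x /\ gmul p g = gzero)); apply: (lift_p pr HF nilF).
Qed.

Definition genG (i : nat) : G :=
  match (insub i : option 'I_m) with Some j => liftG (delta_mx 0 j) | None => gzero end.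
Definition genF (i : nat) : F := liftF (theta (piG (genG i))).
Definition coef (x : 'rV['F_p]_m) (i : nat) : nat :=
  match (insub i : option 'I_m) with Some j => nat_of_ord (x 0 j) | None => 0%N end.

Lemma genG_p i : gmul p (genG i) = gzero.
Proof. by rewrite /genG; case: insubP => [j _ _|_]; [case: (liftG_spec (delta_mx 0 j)) | exact: gmulg0]. Qed.
Lemma genF_p i : gmul p (genF i) = gzero.
Proof. by case: (liftF_spec (theta (piG (genG i)))). Qed.
Lemma genF_pi i : piF (genF i) = theta (piG (genG i)).
Proof. by case: (liftF_spec (theta (piG (genG i)))). Qed.

Lemma coef_add_gen (H : group) (g : nat -> H) (hg : forall i, gmul p (g i) = gzero) x y i :
  gmul (coef x i + coef y i) (g i) = gmul (coef (x + y) i) (g i).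
Proof.
rewrite /coef; case: insubP => [j _ _|_] //.
by rewrite mxE val_Fp_add // gmul_mod.
Qed.

Lemma coef0 i : coef 0 i = 0%N.
Proof. by rewrite /coef; case: insubP => [j _ _|_] //; rewrite mxE. Qed.

Lemma Ssum0 (H : group) (g : nat -> H) k : Ssum g (coef 0) k = gzero.
Proof. by elim: k => [|k IH] //=; rewrite IH coef0 g0x. Qed.

Lemma gmul_theta c i : piF (gmul c (genF i)) = theta (piG (gmul c (genG i))).
Proof. by rewrite (pi_gmul HF) (pi_gmul HG) theta_muln genF_pi. Qed.

Lemma pi_S_theta c k : piF (Ssum genF c k) = theta (piG (Ssum genG c k)).
Proof.
elim: k => [|k IH] /=; first by rewrite (pi0 HF) (pi0 HG) theta0.
by rewrite (pi_add HF) (pi_add HG) theta_add IH gmul_theta.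
Qed.

Lemma pi_SG_row x k : piG (Ssum genG (coef x) k) = \row_j (if (j < k)%N then x 0 j else 0).
Proof.
elim: k => [|k IH] /=.
  by rewrite (pi0 HG); apply/rowP => j; rewrite !mxE.
rewrite (pi_add HG) IH (pi_gmul HG) /genG /coef.
case: insubP => [j _ ej|hk].
  case: (liftG_spec (delta_mx 0 j)) => -> _.
  apply/rowP => i; rewrite !mxE mulmxnE !mxE eqxx /=.
  case: (eqVneq i j) => [->|nij].
    by rewrite ej ltnn leqnn /= add0r natr_Fp.
  rewrite ltnS (leq_eqVlt i).
  have -> : (nat_of_ord i == k) = false by rewrite -ej; apply/negbTE; rewrite (inj_eq val_inj).
  by rewrite /= mul0rn addr0.
rewrite (pi0 HG) mul0rn addr0; apply/rowP => i; rewrite !mxE.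
have hi : (i < k)%N by apply: leq_trans (ltn_ord i) _; rewrite leqNgt.
by rewrite hi ltnS ltnW.
Qed.

Definition SG x := Ssum genG (coef x) m.
Definition SF x := Ssum genF (coef x) m.

Lemma piG_SG x : piG (SG x) = x.
Proof. by rewrite /SG pi_SG_row; apply/rowP => j; rewrite mxE ltn_ord. Qed.
Lemma piF_SF x : piF (SF x) = theta x.
Proof. by rewrite /SF pi_S_theta -/(SG x) piG_SG. Qed.

Lemma K_Qsum c1 c2 k : K piG (Qsum genG c1 c2 k).
Proof.
elim: k => [|k IH] /=; first exact: (pi0 HG).
by apply: (K_add HG) => //; apply: (pi_comm HG).
Qed.

Lemma psi_comm a b a' b' : piF a' = theta (piG a) -> piF b' = theta (piG b) ->
  psi (gcomm a b) = gcomm a' b'.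
Proof.
move=> ea eb.
have [hw ew] := invphiG_spec (pi_comm HG a b).
have hc : comm_fun phiG piG (piG a) (piG b) (invphiG (gcomm a b)).
  by split => //; exists a, b.
rewrite /psi; case: (hcomm hc) => _ [g' [h' [eg eh ->]]].
by apply: (comm_images pr HF nilF); rewrite ?ea ?eb.
Qed.

Lemma psi_Q c1 c2 k : psi (Qsum genG c1 c2 k) = Qsum genF c1 c2 k.
Proof.
elim: k => [|k IH] /=; first exact: psi0.
rewrite psi_add; [|exact: K_Qsum|exact: (pi_comm HG)].
by rewrite IH (psi_comm (gmul_theta _ _) (pi_S_theta _ _)).
Qed.

Lemma collectG x y : SG x ⊕ SG y = SG (x + y) ⊕ Qsum genG (coef x) (coef y) m.
Proof.
apply: collect; first exact: (comm_central pr HG nilG).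
by move=> i; apply: coef_add_gen; apply: genG_p.
Qed.
Lemma collectF x y : SF x ⊕ SF y = SF (x + y) ⊕ Qsum genF (coef x) (coef y) m.
Proof.
apply: collect; first exact: (comm_central pr HF nilF).
by move=> i; apply: coef_add_gen; apply: genF_p.
Qed.

Definition Phi (g : G) : F := SF (piG g) ⊕ psi (⊖ SG (piG g) ⊕ g).

Lemma K_decomp g : K piG (⊖ SG (piG g) ⊕ g).
Proof. by rewrite /K (pi_add HG) (piN HG) piG_SG addNr. Qed.

Lemma Phi_decomp x z : K piG z -> Phi (SG x ⊕ z) = SF x ⊕ psi z.
Proof.
move=> hz; rewrite /Phi (pi_add HG) piG_SG hz addr0 gKx //.
Qed.

Lemma Phi_add g1 g2 : Phi (g1 ⊕ g2) = Phi g1 ⊕ Phi g2.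
Proof.
have k1 := K_decomp g1; have k2 := K_decomp g2.
rewrite -(gxK (SG (piG g1)) g1) -(gxK (SG (piG g2)) g2).
move: k1 k2; move: (⊖ SG (piG g1) ⊕ g1) (⊖ SG (piG g2) ⊕ g2) => z1 z2 k1 k2.
move: (piG g1) (piG g2) => x y.
rewrite !Phi_decomp //.
have c1 := K_central pr HG nilG k1.
rewrite -gA [z1 ⊕ _]gA (c1 (SG y)) !gA collectG -!gA Phi_decomp; last first.
  by apply: (K_add HG); [exact: K_Qsum | apply: (K_add HG)].
rewrite !psi_add //; [|exact: K_Qsum|apply: (K_add HG) => //].
rewrite psi_Q.
have c1F := K_central pr HF nilF (psi_K k1).
rewrite [psi z1 ⊕ (SF y ⊕ _)]gA (c1F (SF y)) !gA collectF.
done.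
Qed.

Lemma Phi0 : Phi gzero = gzero.
Proof. by apply: (@gaddIl _ (Phi gzero)); rewrite -Phi_add !gx0. Qed.
Lemma PhiN g : Phi (⊖ g) = ⊖ Phi g.
Proof. by apply: (@gaddIl _ (Phi g)); rewrite -Phi_add !gxN Phi0. Qed.

Lemma Phi_ker g : Phi g = gzero -> g = gzero.
Proof.
have kz := K_decomp g.
rewrite -(gxK (SG (piG g)) g).
move: kz; move: (⊖ SG (piG g) ⊕ g) => z kz; move: (piG g) => x.
rewrite Phi_decomp // => h.
have hx : theta x = 0.
  by have := congr1 piF h; rewrite (pi_add HF) piF_SF (psi_K kz) addr0 (pi0 HF).
have x0 : x = 0 by apply: theta_inj; rewrite hx theta0.
move: h; rewrite x0 /SF /SG !Ssum0 !g0x => h.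
have h0 : psi z = psi gzero by rewrite h psi0.
have [iz ez] := invphiG_spec kz; have [i0 e0] := invphiG_spec (pi0 HG).
have : invphiG z = invphiG gzero.
  apply: sigma_inj => //; apply: (phi_inj HF) => //; exact: sigma_inM.
by move=> e; rewrite -ez e e0.
Qed.

Lemma Phi_inj : injective Phi.
Proof.
move=> a b e; apply: geq_sub; apply: Phi_ker.
by rewrite Phi_add PhiN e gNx.
Qed.

Lemma Phi_surj h : exists g, Phi g = h.
Proof.
case: ht => -[t' c1 c2] _.
set x := t' (piF h).
have ex : theta x = piF h by rewrite /x c2.
have kz : K piF (⊖ SF x ⊕ h) by rewrite /K (pi_add HF) (piN HF) piF_SF ex addNr.
case/(pi_ker HF): kz => v hv ev.
case: (sigma_surj hv) => u hu su.
exists (SG x ⊕ phiG u).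
rewrite Phi_decomp; last exact: (K_phi HG).
by rewrite /psi invphiG_phi // su ev gxK.
Qed.

Lemma back_iso : exists f : G -> F, group_iso f.
Proof.
exists Phi; split; last exact: Phi_add.
pose inv h := epsilon (inhabits gzero) (fun g => Phi g = h).
have hinv : forall h, Phi (inv h) = h.
  by move=> h; apply: (epsilon_spec (inhabits gzero) (fun g => Phi g = h)); apply: Phi_surj.
exists inv => [g|h]; last exact: hinv.
by apply: Phi_inj; rewrite hinv.
Qed.

End Back.



Section Hom.
Variables (G F : group) (f : G -> F).
Hypothesis fadd : forall x y, f (x ⊕ y) = f x ⊕ f y.
Lemma hom0 : f gzero = gzero.
Proof. by apply: (@gaddIl _ (f gzero)); rewrite -fadd !gx0. Qed.
Lemma homN g : f (⊖ g) = ⊖ f g.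
Proof. by apply: (@gaddIl _ (f g)); rewrite -fadd !gxN hom0. Qed.
Lemma hom_gmul k g : f (gmul k g) = gmul k (f g).
Proof. by elim: k => [|k IH] /=; rewrite ?hom0 // fadd IH. Qed.
Lemma hom_comm a b : f (gcomm a b) = gcomm (f a) (f b).
Proof. by rewrite /gcomm !fadd !homN. Qed.
End Hom.

Lemma iso_inv (G F : group) (f : G -> F) : group_iso f ->
  exists g : F -> G, [/\ group_iso g, cancel f g & cancel g f].
Proof.
case=> -[g c1 c2] fadd; exists g; split => //; split; first by exists f.
by move=> x y; apply: (can_inj c1); rewrite fadd !c2.
Qed.

Section HomK.
Variables (p n m : nat) (G F : group).
Variables (phiG : ('I_n -> algC) -> G) (piG : G -> 'rV['F_p]_m).
Variables (phiF : ('I_n -> algC) -> F) (piF : F -> 'rV['F_p]_m).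
Hypothesis pr : prime p.
Hypotheses (HG : chernikov_ext phiG piG) (HF : chernikov_ext phiF piF).
Variable f : G -> F.
Hypothesis fadd : forall x y, f (x ⊕ y) = f x ⊕ f y.

Lemma f_K z : K piG z -> K piF (f z).
Proof.
move=> /(K_div pr HG) [w _ <-].
by rewrite (hom_gmul fadd); apply: (pi_gmul_p pr HF).
Qed.

Lemma f_img a b : piG a = piG b -> piF (f a) = piF (f b).
Proof.
move=> e; have k : K piG (⊖ a ⊕ b) by rewrite /K (pi_add HG) (piN HG) e addNr.
have := f_K k; rewrite /K fadd (homN fadd) (pi_add HF) (piN HF) => /eqP.
by rewrite addrC subr_eq0 => /eqP.
Qed.
End HomK.

Section Fwd.
Variables (p n m : nat) (G F : group).
Variables (phiG : ('I_n -> algC) -> G) (piG : G -> 'rV['F_p]_m).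
Variables (phiF : ('I_n -> algC) -> F) (piF : F -> 'rV['F_p]_m).
Hypothesis pr : prime p.
Hypotheses (HG : chernikov_ext phiG piG) (HF : chernikov_ext phiF piF).
Variables (f : G -> F) (g : F -> G).
Hypotheses (hf : group_iso f) (hg : group_iso g) (fK : cancel f g) (gK : cancel g f).

Let fadd := hf.2.
Let gadd' := hg.2.

Definition invphiF (z : F) : 'I_n -> algC :=
  epsilon (inhabits (one_n n)) (fun u => inM p n u /\ phiF u = z).

Lemma invphiF_spec z : K piF z -> inM p n (invphiF z) /\ phiF (invphiF z) = z.
Proof.
move=> /(pi_ker HF) [u hu hz]; rewrite /invphiF.
by apply: (epsilon_spec (inhabits (one_n n)) (fun u => inM p n u /\ phiF u = z)); exists u.
Qed.

Definition sig (u : 'I_n -> algC) := invphiF (f (phiG u)).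

Lemma sig_spec u : inM p n u -> inM p n (sig u) /\ phiF (sig u) = f (phiG u).
Proof. by move=> hu; apply: invphiF_spec; apply: (f_K pr HG HF fadd); apply: (K_phi HG). Qed.

Lemma sig_aut : autM p n sig.
Proof.
split.
- by move=> u hu; case: (sig_spec hu).
- move=> u v hu hv; have [su eu] := sig_spec hu; have [sv ev] := sig_spec hv.
  have huv := inM_Mop hu hv; have [suv euv] := sig_spec huv.
  apply: (phi_inj HF) => //; first exact: inM_Mop.
  by rewrite euv (phi_add HG) // fadd (phi_add HF) // eu ev.
- move=> u v hu hv e; have [su eu] := sig_spec hu; have [sv ev] := sig_spec hv.
  apply: (phi_inj HG) => //; apply: (can_inj fK); by rewrite -eu -ev e.
- move=> v hv.
  have k : K piG (g (phiF v)) by apply: (f_K pr HF HG gadd'); apply: (K_phi HF).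
  case/(pi_ker HG): k => u hu eu; exists u => //.
  have [su e] := sig_spec hu.
  by apply: (phi_inj HF) => //; rewrite e eu gK.
Qed.

Definition lG (x : 'rV['F_p]_m) : G := epsilon (inhabits gzero) (fun a => piG a = x).
Definition lF (x : 'rV['F_p]_m) : F := epsilon (inhabits gzero) (fun a => piF a = x).
Lemma lG_spec x : piG (lG x) = x.
Proof. by apply: (epsilon_spec (inhabits gzero) (fun a => piG a = x)); apply: (pi_surj HG). Qed.
Lemma lF_spec x : piF (lF x) = x.
Proof. by apply: (epsilon_spec (inhabits gzero) (fun a => piF a = x)); apply: (pi_surj HF). Qed.

Definition th (x : 'rV['F_p]_m) := piF (f (lG x)).

Lemma th_aut : autH th.
Proof.
split.
  exists (fun y => piG (g (lF y))) => [x|y]; rewrite /th.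
    rewrite (f_img pr HF HG gadd' (b := f (lG x))) ?lF_spec // fK lG_spec //.
  rewrite (f_img pr HG HF fadd (b := g (lF y))) ?lG_spec // gK lF_spec //.
move=> x y; rewrite /th -(pi_add HF) -fadd; apply: (f_img pr HG HF fadd).
by rewrite (pi_add HG) !lG_spec.
Qed.

Lemma fwd_comm x y w : comm_fun phiG piG x y w -> comm_fun phiF piF (th x) (th y) (sig w).
Proof.
case=> hw [a [b [ea eb ew]]]; have [sw e] := sig_spec hw.
split => //; exists (f a), (f b); split.
- by rewrite /th; apply: (f_img pr HG HF fadd); rewrite lG_spec.
- by rewrite /th; apply: (f_img pr HG HF fadd); rewrite lG_spec.
- by rewrite e ew (hom_comm fadd).
Qed.
End Fwd.

Local Close Scope ring_scope.
Theorem theorem1p2 (p n m : nat) (G F : group)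
    (phiG : ('I_n -> algC) -> G) (piG : G -> 'rV['F_p]_m)
    (phiF : ('I_n -> algC) -> F) (piF : F -> 'rV['F_p]_m) :
  prime p ->
  nilpotent G -> chernikov_ext phiG piG ->
  nilpotent F -> chernikov_ext phiF piF ->
  (exists f : G -> F, group_iso f) <->
  (exists sigma theta, [/\ autM p n sigma, autH theta &
     forall (x y : 'rV['F_p]_m) (w : 'I_n -> algC),
       comm_fun phiG piG x y w -> comm_fun phiF piF (theta x) (theta y) (sigma w)]).
Proof.
move=> pr nG HG nF HF; split.
- case=> f hf; case: (iso_inv hf) => g [hg fK gK].
  exists (sig p phiG phiF f), (th piG piF f); split.
  + exact: (sig_aut pr HG HF hf hg fK gK).
  + exact: (th_aut pr HG HF hf hg fK gK).
  + exact: (fwd_comm pr HG HF hf).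
- case=> sigma [theta [hs ht hc]].
  exact: (back_iso pr nG HG nF HF hs ht hc).
Qed.
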